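(* Let $0<\sigma<\tau$, $\mu>0$, $\kappa_2\in(0,1)$ and $t_2\in(\sigma,\tau)$. For every $\omega\ge(1-\kappa_2)/(\tau-t_2)$, any solution $(x(t),y(t))$ on $[\sigma,\tau]$ of \[ x'=y,\qquad y'=\mu a^-(t)g(x) \] with $x(t_2)\ge\kappa_2$ and $y(t_2)\ge\omega$ satisfies $x(\tau)\ge1$ and $y(\tau)\ge\omega$.
   Context: $a\in L^1(\sigma,\tau)$ with negative part $a^-\ge0$. $g\colon\mathbb{R}\to[0,+\infty)$ is the extension by zero outside $[0,1]$ of a locally Lipschitz continuous function $g\colon[0,1]\to[0,+\infty)$ with $g(0)=g(1)=0$, $g(s)>0$ for $0<s<1$ and $\lim_{s\to0^+}g(s)/s=0$. Solutions are in the Carathéodory sense. *)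

(* Defs.v *)
From HB Require Import structures.
From mathcomp Require Import all_boot all_order all_algebra.
From mathcomp Require Import all_classical all_reals all_analysis.
Set Implicit Arguments. Unset Strict Implicit. Unset Printing Implicit Defensive.
Import Order.TTheory GRing.Theory Num.Theory.
Import numFieldNormedType.Exports.
Local Open Scope classical_set_scope.
Local Open Scope ring_scope.

Definition negpart (R : realType) (a : R -> R) : R -> R :=
  fun t => Num.max (- a t) 0.

Definition L1_on (R : realType) (sigma tau : R) (a : R -> R) : Prop :=
  (@lebesgue_measure R).-integrable `[sigma, tau] (EFin \o a).

Definition loc_lipschitz_01 (R : realType) (h : R -> R) : Prop :=
  forall s0, 0 <= s0 <= 1 ->
    exists r : R, exists L : R, 0 < r /\
      forall s1 s2, 0 <= s1 <= 1 -> 0 <= s2 <= 1 ->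
        `|s1 - s0| < r -> `|s2 - s0| < r ->
        `|h s1 - h s2| <= L * `|s1 - s2|.

Definition g_hyp (R : realType) (g : R -> R) : Prop :=
  (forall s, 0 <= g s) /\
  (forall s, (s < 0) || (1 < s) -> g s = 0) /\
  loc_lipschitz_01 g /\
  g 0 = 0 /\ g 1 = 0 /\
  (forall s, 0 < s < 1 -> 0 < g s) /\
  (g s / s @[s --> 0^'+] --> 0).

(* (x,y) is a Caratheodory solution on [sigma,tau] of
     x' = y,  y' = mu a^-(t) g(x):
   x, y are absolutely continuous with x' = y, y' = mu a^- g(x) a.e.,
   written in the equivalent integral form (integrable right-hand sides). *)
Definition cara_solution (R : realType) (sigma tau mu : R) (a g : R -> R)
    (x y : R -> R) : Prop :=
  [/\ (@lebesgue_measure R).-integrable `[sigma, tau] (EFin \o y),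
      (@lebesgue_measure R).-integrable `[sigma, tau]
          (EFin \o (fun s => mu * negpart a s * g (x s))),
      (forall t, sigma <= t <= tau ->
          x t = x sigma + Rintegral (@lebesgue_measure R) `[sigma, t] y)
    & (forall t, sigma <= t <= tau ->
          y t = y sigma + Rintegral (@lebesgue_measure R) `[sigma, t]
                  (fun s => mu * negpart a s * g (x s)))].

(* Main.v *)
Require Import Defs.
From HB Require Import structures.
From mathcomp Require Import all_boot all_order all_algebra.
From mathcomp Require Import all_classical all_reals all_analysis.
From mathcomp Require Import measurable_realfun.
Import Order.TTheory GRing.Theory Num.Theory.
Import numFieldNormedType.Exports.
Local Open Scope classical_set_scope.
Local Open Scope ring_scope.

Lemma int_diff (R : realType) (sigma tau u v : R) (f : R -> R) :
  (@lebesgue_measure R).-integrable `[sigma, tau] (EFin \o f) ->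
  sigma <= u -> u <= v -> v <= tau ->
  Rintegral (@lebesgue_measure R) `[sigma, v] f -
  Rintegral (@lebesgue_measure R) `[sigma, u] f =
  Rintegral (@lebesgue_measure R) `]u, v] f.
Proof.
move=> hf su uv vt.
apply: Rintegral_itvB; rewrite ?bnd_simp //.
apply: integrableS hf => //; apply: subset_itvl; by rewrite bnd_simp.
Qed.

Lemma int_cst (R : realType) (u v k : R) :
  (@lebesgue_measure R).-integrable `]u, v] (EFin \o cst k).
Proof.
apply/integrableP; split; first by apply/measurable_EFinP; exact: measurable_cst.
under eq_integral do rewrite /=.
rewrite (@integral_cst _ _ _ _ _ _ `|k|%:E) //= lebesgue_measure_itv /=.
case: ifP => _; last by rewrite mule0 ltry.
by rewrite -EFinB -EFinM ltry.
Qed.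

From mathcomp Require Import lra.
Theorem lemma2p6 (R : realType) (sigma tau mu kappa2 t2 : R) (a g : R -> R)
  (hst : 0 < sigma) (hst' : sigma < tau) (hmu : 0 < mu)
  (hk : 0 < kappa2 < 1) (ht2 : sigma < t2 < tau)
  (ha : L1_on sigma tau a) (hg : g_hyp g) :
  forall omega : R, (1 - kappa2) / (tau - t2) <= omega ->
  forall x y : R -> R, cara_solution sigma tau mu a g x y ->
  kappa2 <= x t2 -> omega <= y t2 ->
  1 <= x tau /\ omega <= y tau.
Proof.
move=> omega homega x y [iy iF hx hy] hx2 hy2.
case: hg => g0 _.
case/andP: ht2 => st2 t2t.
have F0 : forall s, 0 <= mu * negpart a s * g (x s).
  move=> s; have n0 : 0 <= negpart a s by rewrite /negpart le_max lexx orbT.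
  apply: mulr_ge0 => //; apply: mulr_ge0 => //; exact: ltW.
have ymono : forall t, t2 <= t <= tau -> y t2 <= y t.
  move=> t /andP[h1 h2]; rewrite -subr_ge0.
  rewrite (hy t) ?(hy t2); last 2 first.
    by rewrite (ltW st2) (ltW t2t).
    by rewrite (le_trans (ltW st2) h1) h2.
  rewrite opprD addrACA subrr add0r (@int_diff R sigma tau _ _ _ iF) //; last exact: ltW.
  exact: Rintegral_ge0.
have Hx : x tau - x t2 = Rintegral (@lebesgue_measure R) `]t2, tau] y.
  rewrite (hx tau) ?(hx t2); last 2 first.
    by rewrite (ltW st2) (ltW t2t).
    by rewrite (ltW hst') lexx.
  by rewrite opprD addrACA subrr add0r (@int_diff R sigma tau _ _ _ iy) // ltW.
have Hge : omega * (tau - t2) <= Rintegral (@lebesgue_measure R) `]t2, tau] y.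
  have -> : omega * (tau - t2) = Rintegral (@lebesgue_measure R) `]t2, tau] (cst omega).
    rewrite Rintegral_cst //. have h := lebesgue_measure_itv `]t2, tau]; simpl in h; rewrite lte_fin t2t in h. by rewrite -[X in fine X]/(lebesgue_measure `]t2, tau]) h.
  apply: le_Rintegral => //.
  - exact: int_cst.
  - apply: integrableS iy => //; apply: subset_itvr; rewrite bnd_simp ltW //.
  - move=> s /=; rewrite in_itv /= => /andP[h1 h2].
    apply: le_trans hy2 (ymono s _); by rewrite (ltW h1) h2.
split; last by apply: le_trans hy2 (ymono tau _); rewrite lexx ltW.
have ht : 0 < tau - t2 by rewrite subr_gt0.
move: homega; rewrite ler_pdivrMr // => h.
have e : x tau = x t2 + (x tau - x t2) by rewrite addrC subrK.
rewrite e Hx; apply: le_trans (lerD hx2 (le_trans h Hge)).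
by rewrite addrC subrK.
Qed.
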